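(* Assume $d_2<h_2$ and that alternative (A) holds, namely: (i) $S_0,S_1,\dots,S_n$ are pairwise disjoint and their union is the set of all admissible $k$-words beginning with $b$; (ii) $\gamma=1$ and $\alpha_{i_1}=\cdots=\alpha_{i_n}=-1$; (iii) $B_1=\cdots=B_{n-1}$, this common block is simple, and $B_n$ differs from an initial segment of it exactly in the last symbol. Then $c^{11}_{d_1-i}=0$ for all integers $0<i<\delta$. If moreover $h_1\le h_2$, then $c^{21}_{d_1-i}=0$ for all integers $0\le i<\delta-r+1$.
   Context: Let $\mathcal{A}$ be a finite alphabet of $r$ symbols and $T=(T_{x,y})$ an irreducible $r\times r$ matrix with entries in $\{0,1\}$ (the directed graph on $\mathcal{A}$ with an edge $x\to y$ iff $T_{y,x}=1$ is strongly connected). An admissible $k$-word is a string $a_1\cdots a_k$ with $T_{a_{i+1},a_i}=1$ for all $i$. $V_k$ is the complex vector space with basis $\{[w]\}$ indexed by admissible $k$-words; $\psi_k:V_1\to V_k$ is linear with $\psi_k([a])$ the sum of $[w]$ over admissible $k$-words beginning with $a$; $T_k:V_k\to V_k$ is linear with $T_k([a_1\cdots a_k])=\sum[a_2\cdots a_kx]$ over symbols $x$ with $a_2\cdots a_kx$ admissible. For an admissible $k$-word $u=u_1\cdots u_k$, $h(u)$ is the least non-negative integer $h$ such that $u$ is the only admissible $k$-word beginning with $u_1\cdots u_{h+1}$. Fix admissible $(k+1)$-words $w_1=a_0\cdots a_k$, $w_2=b_0\cdots b_k$; put $d_1=h_1=h(a_1\cdots a_k)$, $h_2=h(b_1\cdots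 b_k)$. Let $W$ be the span of $\psi_k(V_1)$ and $T_k^i[a_1\cdots a_k]$, $0\le i\le d_1-1$ (these vectors together with the $\psi_k([a])$ form a basis of $W$, which is $T_k$-invariant). Let $d_2$ be the least non-negative integer with $T_k^{d_2}[b_1\cdots b_k]\in W$, and $\delta=h_2-d_2$. Write the unique expansion $T_k^{d_2}[b_1\cdots b_k]=\sum_{i=0}^{d_1-1}\alpha_iT_k^i[a_1\cdots a_k]+\psi_k(v)$, $v\in V_1$; let $b=b_{d_2+1}$, $\gamma$ the coefficient of $[b]$ in $v$, and $i_1<\cdots<i_n$ the indices with $\alpha_i\ne0$. Put $s_0=b_{d_2+1}\cdots b_{h_2+1}$, $s_m=a_{i_m+1}\cdots a_{h_1+1}$ ($1\le m\le n$), $S_m$ the set of admissible $k$-words beginning with $s_m$; blocks $B_m=a_{i_m+1}\cdots a_{i_{m+1}}$ ($1\le m\le n-1$), $B_n=a_{i_n+1}\cdots a_{h_1+1}$. A word is simple if it is not $A^e$ for a word $A$ and $e>1$. Correlation coefficients: for $0\le i\le d_1$, $c^{11}_{d_1-i}=1$ if $a_0a_1\cdots a_{k-i}=a_i\cdots a_k$ and $0$ otherwise; $c^{21}_{d_1-i}=1$ if $b_0\cdots b_{k-i}=a_i\cdots a_k$ and $0$ otherwise. *)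

(* Defs.v *)
(* Vectors in V_k are modelled as finite functions on
   k-tuples over the alphabet with complex (algC) coefficients; all vectors
   used are supported on admissible k-words. *)
From HB Require Import structures.
From mathcomp Require Import all_boot all_order all_algebra all_field.
Set Implicit Arguments. Unset Strict Implicit. Unset Printing Implicit Defensive.
Import GRing.Theory Num.Theory.
Local Open Scope ring_scope.

Section Defs.
Variables (A : finType) (T : A -> A -> bool).
(* T x y is the matrix entry T_{x,y} (1 iff true). *)

Definition admissible (s : seq A) : bool := sorted (fun x y => T y x) s.

Definition irreducible01 : Prop := forall x y : A, connect (fun x y => T y x) x y.

Definition sc (k : nat) (c : algC) (f : {ffun k.-tuple A -> algC}) : {ffun k.-tuple A -> algC} :=
  [ffun u => c * f u].

Definition bvec (k : nat) (s : seq A) : {ffun k.-tuple A -> algC} :=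
  [ffun u : k.-tuple A => ((val u == s) : nat)%:R].

Definition Tk_basis (k : nat) (w : seq A) : {ffun k.-tuple A -> algC} :=
  \sum_(x : A | admissible (rcons (behead w) x)) bvec k (rcons (behead w) x).

Definition Tk (k : nat) (f : {ffun k.-tuple A -> algC}) : {ffun k.-tuple A -> algC} :=
  \sum_(w : k.-tuple A | admissible w) sc (f w) (Tk_basis k w).

Definition psi_basis (k : nat) (a : A) : {ffun k.-tuple A -> algC} :=
  \sum_(w : k.-tuple A | admissible w && prefix [:: a] w) bvec k w.

Definition psi (k : nat) (v : {ffun A -> algC}) : {ffun k.-tuple A -> algC} :=
  \sum_(a : A) sc (v a) (psi_basis k a).

Definition hP (u : seq A) (h : nat) : bool :=
  [forall w : (size u).-tuple A,
     (admissible w && (take h.+1 w == take h.+1 u)) ==> (val w == u)].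

(* h(u): the least such h (it is at most |u| - 1 for admissible u) *)
Definition hword (u : seq A) : nat := find (hP u) (iota 0 (size u)).

Definition in_W (k : nat) (a' : seq A) (d1 : nat) (x : {ffun k.-tuple A -> algC}) : Prop :=
  exists (al : nat -> algC) (v : {ffun A -> algC}),
    x = \sum_(i < d1) sc (al i) (iter i (@Tk k) (bvec k a')) + psi k v.

Definition subw (w : seq A) (i j : nat) : seq A := drop i (take j.+1 w).

Definition Sset (k : nat) (s : seq A) : {set k.-tuple A} :=
  [set u : k.-tuple A | admissible u && prefix s u].

Definition simple_word (s : seq A) : Prop :=
  forall (B : seq A) (e : nat), (1 < e)%N -> s <> flatten (nseq e B).

Definition differs_last (s t : seq A) : Prop :=
  exists (p : seq A) (x y : A), prefix (rcons p x) t /\ s = rcons p y /\ x != y.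

End Defs.

(* Main.v *)
Require Import Defs.
From HB Require Import structures.
From mathcomp Require Import all_boot all_order all_algebra all_field.
From mathcomp Require Import zify.
Set Implicit Arguments. Unset Strict Implicit. Unset Printing Implicit Defensive.

Definition branch (A : finType) (T : A -> A -> bool) (z e : A) : Prop :=
  exists c, c != e /\ T c z.

Lemma prefix_shorter (A : eqType) (u s s' : seq A) :
  prefix u s -> prefix s' s -> (size u <= size s')%N -> prefix u s'.
Proof.
rewrite !prefixE => /eqP H1 /eqP H2 Hs.
by rewrite -H2 take_takel // H1.
Qed.

Lemma prefix_same_size (A : eqType) (u s : seq A) :
  prefix u s -> size u = size s -> u = s.
Proof. by rewrite prefixE => /eqP H Hs; rewrite -H Hs take_size. Qed.

Lemma prefix_rcons2 (A : eqType) (p : seq A) a a' U :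
  prefix (rcons p a) U -> prefix (rcons p a') U -> a = a'.
Proof.
move=> H1 H2.
have H3 : prefix (rcons p a) (rcons p a').
  by apply: (prefix_shorter H1 H2); rewrite !size_rcons.
have := prefix_same_size H3; rewrite !size_rcons => /(_ erefl) /rcons_inj [].
by [].
Qed.

Lemma prefix_nth (A : eqType) x0 (u U : seq A) i :
  prefix u U -> (i < size u)%N -> nth x0 u i = nth x0 U i.
Proof. by rewrite prefixE => /eqP H Hi; rewrite -H nth_take. Qed.

Lemma adm_rcons (A : finType) (T : A -> A -> bool) x0 (p : seq A) c :
  admissible T p -> (0 < size p)%N -> T c (last x0 p) -> admissible T (rcons p c).
Proof.
case: p => [//|x p] /= Hp _ Hc.
rewrite /admissible /= rcons_path Hp /=.
by [].
Qed.

Lemma adm_prefix (A : finType) (T : A -> A -> bool) (p U : seq A) :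
  prefix p U -> admissible T U -> admissible T p.
Proof. exact: prefix_sorted. Qed.

Lemma ext_word (A : finType) (T : A -> A -> bool) (x0 : A)
  (succ : forall z, exists c, T c z) k (u : seq A) :
  admissible T u -> (0 < size u)%N -> (size u <= k)%N ->
  exists U, [/\ size U = k, admissible T U & prefix u U].
Proof.
move Hd : (k - size u)%N => d.
elim: d u Hd => [|d IH] u Hd Ha Hs Hk.
  by exists u; split=> //; [lia | apply: prefix_refl].
have [c Hc] := succ (last x0 u).
have Ha' := adm_rcons Ha Hs Hc.
have [|||U [H1 H2 H3]] := IH (rcons u c) _ Ha'; rewrite ?size_rcons //; try lia.
exists U; split=> //; apply: prefix_trans H3; exact: prefix_rcons.
Qed.

Lemma prefix_head (A : eqType) x0 (u U : seq A) :
  prefix u U -> (0 < size u)%N -> prefix [:: head x0 u] U.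
Proof.
case: u => [//|x u] H _; case: U H => [//|y U]; rewrite !prefix_cons => /andP[-> _].
exact: prefix0s.
Qed.

Lemma last_take (A : Type) (x0 : A) (Z : seq A) q :
  (q < size Z)%N -> last x0 (take q.+1 Z) = nth x0 Z q.
Proof. by move=> Hq; rewrite (take_nth x0) // last_rcons. Qed.

Lemma head_rcons_ne (A : Type) (x0 : A) (p : seq A) c :
  (0 < size p)%N -> head x0 (rcons p c) = head x0 p.
Proof. by case: p. Qed.

Lemma head_take (A : Type) (x0 : A) (Z : seq A) q :
  head x0 (take q.+1 Z) = head x0 Z.
Proof. by case: Z. Qed.

Lemma cut_lemma (A : finType) (T : A -> A -> bool) (x0 b y z0 : A) k (p0 Z : seq A)
 (F : seq A -> Prop)
 (succ : forall z, exists c, T c z)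
 (cover : forall U, size U = k -> admissible T U -> prefix [:: b] U ->
     prefix (rcons p0 z0) U \/ exists2 u, F u & prefix u U)
 (disj : forall U u, size U = k -> admissible T U -> F u ->
     prefix (rcons p0 z0) U -> prefix u U -> False)
 (Fform : forall u, F u -> exists u', [/\ u = rcons u' y, prefix u' Z & ~~ prefix u Z])
 (FZ : F (rcons Z y))
 (adm0 : admissible T (rcons p0 z0)) (sz0 : (0 < size p0)%N) (szk0 : (size p0 < k)%N)
 (hd0 : head x0 p0 = b)
 (br0 : branch T (last x0 p0) z0)
 (admZ : admissible T (rcons Z y)) (szZ : (0 < size Z)%N) (szZk : (size Z < k)%N)
 (hdZ : head x0 Z = b)
 (brZ : branch T (last x0 Z) y) :
 [/\ p0 = Z, z0 != y & forall q, (q.+1 < size Z)%N -> branch T (nth x0 Z q) y ->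
      nth x0 Z q.+1 != y].
Proof.
have admp0 : admissible T p0 := adm_prefix (prefix_rcons _ _) adm0.
have admZ0 : admissible T Z := adm_prefix (prefix_rcons _ _) admZ.
have extb : forall u, admissible T u -> (0 < size u)%N -> (size u <= k)%N ->
    head x0 u = b ->
    exists U, [/\ size U = k, admissible T U, prefix u U & prefix [:: b] U].
  move=> u Hu Hs Hk Hh; have [U [H1 H2 H3]] := ext_word x0 succ Hu Hs Hk.
  by exists U; split => //; rewrite -Hh; exact: prefix_head H3 Hs.
have [c [Hc1 Hc2]] := br0.
have [U [U1 U2 U3 U4]] := extb (rcons p0 c) (adm_rcons admp0 sz0 Hc2)
   ltac:(by rewrite size_rcons) ltac:(by rewrite size_rcons)
   ltac:(by rewrite head_rcons_ne).
case: (cover U U1 U2 U4) => [H|[u Fu Hu]].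
  by move: Hc1; rewrite (prefix_rcons2 U3 H) eqxx.
have [u' [Eu Pu' NPu]] := Fform u Fu.
have not_short : ~ (size u <= size p0)%N.
  move=> Hs.
  have Hp : prefix u (rcons p0 z0).
    apply: prefix_trans (prefix_rcons p0 z0).
    exact: prefix_shorter Hu (prefix_trans (prefix_rcons p0 c) U3) Hs.
  have [V [V1 V2 V3 V4]] := extb (rcons p0 z0) adm0
   ltac:(by rewrite size_rcons) ltac:(by rewrite size_rcons)
   ltac:(by rewrite head_rcons_ne).
  exact: disj V u V1 V2 Fu V3 (prefix_trans Hp V3).
have ns : (size p0 < size u)%N by rewrite ltnNge; apply/negP.
have Hpc : prefix (rcons p0 c) u.
  by apply: prefix_shorter U3 Hu _; rewrite size_rcons.
have Hszu : size u = (size u').+1 by rewrite Eu size_rcons.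
have Hp0u' : prefix p0 u'.
  have Hu'u : prefix u' u by rewrite Eu; exact: prefix_rcons.
  apply: prefix_shorter (prefix_trans (prefix_rcons p0 c) Hpc) Hu'u _.
  by move: ns; rewrite Hszu ltnS.
have Hp0Z := prefix_trans Hp0u' Pu'.
have HszZ : size p0 = size Z.
  apply/eqP; rewrite eqn_leq size_prefix //=; rewrite leqNgt; apply/negP => Hlt.
  have [c' [Hc'1 Hc'2]] := brZ.
  have [V [V1 V2 V3 V4]] := extb (rcons Z c') (adm_rcons admZ0 szZ Hc'2)
   ltac:(by rewrite size_rcons) ltac:(by rewrite size_rcons)
   ltac:(by rewrite head_rcons_ne).
  case: (cover V V1 V2 V4) => [H|[u2 Fu2 Hu2]].
    have Hs0Z : prefix (rcons p0 z0) Z.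
      by apply: prefix_shorter H (prefix_trans (prefix_rcons Z c') V3) _; rewrite size_rcons.
    have [W [W1 W2 W3 W4]] := extb (rcons Z y) admZ
     ltac:(by rewrite size_rcons) ltac:(by rewrite size_rcons)
     ltac:(by rewrite head_rcons_ne).
    exact: disj W _ W1 W2 FZ (prefix_trans Hs0Z (prefix_trans (prefix_rcons Z y) W3)) W3.
  have [u2' [Eu2 Pu2' NPu2]] := Fform u2 Fu2.
  have := size_prefix Pu2'; rewrite leq_eqVlt => /orP[/eqP Hs2|Hs2].
    have E2 := prefix_same_size Pu2' Hs2.
    move: Hu2; rewrite Eu2 E2 => Hu2.
    have Eyc' := prefix_rcons2 Hu2 V3.
    by move: Hc'1; rewrite -Eyc' eqxx.
  move: NPu2; apply/negP/negPn.
  apply: prefix_shorter Hu2 (prefix_trans (prefix_rcons Z c') V3) _.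
  by rewrite Eu2 size_rcons.
have Ep0 : p0 = Z := prefix_same_size Hp0Z HszZ.
have Eu' : u' = Z.
  have h1 := size_prefix Pu'; have h2 := size_prefix Hp0u'.
  apply: (prefix_same_size Pu'); apply/eqP; rewrite eqn_leq h1 /=.
  by rewrite -HszZ.
have Ecy : c = y.
  move: Hpc; rewrite Eu Eu' Ep0 => H.
  exact: prefix_rcons2 H (prefix_refl _).
split => //; first by rewrite -Ecy eq_sym.
subst p0.
move=> q Hq [c2 [Hc21 Hc22]]; apply/negP => /eqP Hy.
have Htk : admissible T (take q.+1 Z) := adm_prefix (prefix_take _ _) admZ0.
have Hszt : size (take q.+1 Z) = q.+1 by rewrite size_take Hq.
have Hlast : last x0 (take q.+1 Z) = nth x0 Z q by apply: last_take; exact: ltnW Hq.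
have [V [V1 V2 V3 V4]] := extb (rcons (take q.+1 Z) c2)
   (@adm_rcons _ _ x0 _ c2 Htk ltac:(by rewrite Hszt) ltac:(by rewrite Hlast))
   ltac:(by rewrite size_rcons Hszt) ltac:(rewrite size_rcons Hszt; exact: leq_trans Hq (ltnW szZk))
   ltac:(by rewrite head_rcons_ne ?Hszt // head_take).
have nV : nth x0 V q.+1 = c2.
  by rewrite -(prefix_nth x0 V3) ?size_rcons ?Hszt // nth_rcons Hszt ltnn eqxx.
case: (cover V V1 V2 V4) => [H|[w Fw Hw]].
  have := prefix_nth x0 H (i := q.+1) ltac:(by rewrite size_rcons ltnS ltnW).
  rewrite nV nth_rcons ifT // Hy => E.
  by move: Hc21; rewrite E eqxx.
have [w' [Ew Pw' NPw]] := Fform w Fw.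
case: (ltnP q (size w')) => Hs.
  have E1 : nth x0 w q.+1 = y.
    rewrite Ew nth_rcons; case: ltnP => H1.
      by rewrite (prefix_nth x0 Pw') // Hy.
    have -> : q.+1 = size w' by apply/eqP; rewrite eqn_leq Hs H1.
    by rewrite eqxx.
  have E2 : nth x0 w q.+1 = c2.
    by rewrite (prefix_nth x0 Hw) // Ew size_rcons.
  by move: Hc21; rewrite -E2 E1 eqxx.
have H1 : prefix w (rcons (take q.+1 Z) c2).
  by apply: prefix_shorter Hw V3 _; rewrite Ew !size_rcons Hszt ltnS leqW.
have H2 : prefix w (take q.+1 Z).
  by apply: prefix_shorter H1 (prefix_rcons _ _) _; rewrite Ew size_rcons Hszt ltnS.
by move: NPw; rewrite (prefix_trans H2 (prefix_take _ _)).
Qed.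

Lemma adm_nth (A : finType) (T : A -> A -> bool) x0 (w : seq A) j :
  admissible T w -> (j.+1 < size w)%N -> T (nth x0 w j.+1) (nth x0 w j).
Proof.
case: w => [|x p] //= /(pathP x0) H Hj.
exact: H j Hj.
Qed.

Lemma subw_adm (A : finType) (T : A -> A -> bool) (w : seq A) i j :
  admissible T w -> admissible T (subw w i j).
Proof. by move=> H; rewrite /subw; apply: drop_sorted; apply: take_sorted. Qed.

Lemma subw_size (A : finType) (w : seq A) i j :
  (j < size w)%N -> size (subw w i j) = (j.+1 - i)%N.
Proof. move=> H; rewrite /subw size_drop size_take; case: ifP => //; lia. Qed.

Lemma subw_nth (A : finType) x0 (w : seq A) i j q :
  (i + q <= j)%N -> (j < size w)%N -> nth x0 (subw w i j) q = nth x0 w (i + q).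
Proof.
move=> H1 H2; rewrite /subw nth_drop nth_take //; lia.
Qed.

Lemma subw_rcons (A : finType) x0 (w : seq A) i j :
  (i <= j.+1)%N -> (j.+1 < size w)%N ->
  subw w i j.+1 = rcons (subw w i j) (nth x0 w j.+1).
Proof.
move=> H1 H2; rewrite /subw (take_nth x0) // drop_rcons // size_take.
case: ifP => //; lia.
Qed.

Lemma subw_cat (A : finType) (w : seq A) i l j :
  (i <= l.+1)%N -> (l <= j)%N -> (j < size w)%N ->
  subw w i j = subw w i l ++ subw w l.+1 j.
Proof.
move=> H1 H2 H3; rewrite /subw.
have E : take j.+1 w = take l.+1 w ++ drop l.+1 (take j.+1 w).
  by rewrite -{1}(cat_take_drop l.+1 (take j.+1 w)) take_takel.
rewrite {1}E.
have Hs : size (take l.+1 w) = l.+1 by rewrite size_take; case: ifP => //; lia.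
rewrite drop_cat Hs; case: ltnP => H4; first by [].
have -> : i = l.+1 by lia.
by rewrite subnn drop0 (@drop_oversize _ l.+1 (take l.+1 w)) ?Hs.
Qed.

Lemma succ_of (A : finType) (T : A -> A -> bool) (irr : irreducible01 T) (x y : A) :
  T y x -> forall z, exists c, T c z.
Proof.
move=> Hxy z; have := irr z x; case/connectP => p Hp Hl.
case: p Hp Hl => [|c p] /=.
  by move=> _ <-; exists y.
by case/andP => Hzc _ _; exists c.
Qed.

Lemma hP_big (A : finType) (T : A -> A -> bool) (u : seq A) h :
  (size u <= h.+1)%N -> hP T u h.
Proof.
move=> H; apply/forallP => w; apply/implyP => /andP[_ /eqP E].
apply/eqP; rewrite -[val w](@take_oversize _ h.+1) ?size_tuple // E.
by rewrite take_oversize.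
Qed.

Lemma hword_lt (A : finType) (T : A -> A -> bool) (u : seq A) :
  (0 < size u)%N -> (hword T u < size u)%N.
Proof.
move=> H; rewrite /hword.
have : has (hP T u) (iota 0 (size u)).
  apply/hasP; exists (size u).-1; first by rewrite mem_iota; lia.
  by apply: hP_big; lia.
by rewrite has_find size_iota.
Qed.

Lemma hword_P (A : finType) (T : A -> A -> bool) (u : seq A) :
  (0 < size u)%N -> hP T u (hword T u).
Proof.
move=> H; have Hl := hword_lt T H.
have Hh : has (hP T u) (iota 0 (size u)) by rewrite has_find size_iota.
have := nth_find 0 Hh; rewrite nth_iota //.
Qed.

Lemma hword_before (A : finType) (T : A -> A -> bool) (u : seq A) j :
  (0 < size u)%N -> (j < hword T u)%N -> ~~ hP T u j.
Proof.
move=> H Hj; have Hl := hword_lt T H.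
have := before_find 0 Hj; rewrite nth_iota ?add0n; last by lia.
by move=> ->.
Qed.

Lemma hword_branch (A : finType) (T : A -> A -> bool) x0 (u : seq A) :
  (0 < hword T u)%N -> (0 < size u)%N ->
  branch T (nth x0 u (hword T u).-1) (nth x0 u (hword T u)).
Proof.
move=> Hh Hs; set h := hword T u.
have Hl : (h < size u)%N by exact: hword_lt.
have := hword_before Hs (ltac:(lia) : ((hword T u).-1 < hword T u)%N); rewrite /hP -/h prednK //.
case/forallPn => w; rewrite negb_imply => /andP[/andP[Aw /eqP Ew] Nw].
have HP := hword_P T Hs; move/forallP: HP => /(_ w) /implyP HP.
have Hsw : size w = size u by rewrite size_tuple.
have Hne : nth x0 w h != nth x0 u h.
  apply/negP => /eqP E; move: Nw; rewrite HP //; apply/andP; split => //.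
  by rewrite !(take_nth x0) ?Hsw // Ew E.
exists (nth x0 w h); split => //.
have E2 : nth x0 w h.-1 = nth x0 u h.-1.
  have : nth x0 (take h w) h.-1 = nth x0 (take h u) h.-1 by rewrite Ew.
  by rewrite !nth_take // prednK.
rewrite -E2; have := @adm_nth A T x0 w h.-1 Aw; rewrite prednK // Hsw; apply.
by [].
Qed.

Lemma hword_forced (A : finType) (T : A -> A -> bool) x0
  (succ : forall z, exists c, T c z) (u : seq A) j c :
  admissible T u -> (hword T u <= j)%N -> (j.+1 < size u)%N ->
  T c (nth x0 u j) -> c = nth x0 u j.+1.
Proof.
move=> Au Hj Hs Hc; apply/eqP; apply/negPn/negP => Hne.
have Hs0 : (0 < size u)%N by lia.
have Hst : size (take j.+1 u) = j.+1 by rewrite size_take Hs.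
have Av : admissible T (rcons (take j.+1 u) c).
  apply: (@adm_rcons _ _ x0) => //; first exact: take_sorted.
    by rewrite Hst.
  by rewrite last_take //; lia.
have [V [V1 V2 V3]] := @ext_word _ _ x0 succ (size u) _ Av ltac:(by rewrite size_rcons)
   ltac:(by rewrite size_rcons Hst).
have HP := hword_P T Hs0.
move/forallP: HP => /(_ (@Tuple (size u) A V (introT eqP V1))) /implyP /= HP.
have EV : V = u.
  apply/eqP; apply: HP; rewrite V2 /=.
  move: V3; rewrite prefixE size_rcons Hst => /eqP E.
  have -> : take (hword T u).+1 V = take (hword T u).+1 (take j.+2 V).
    by rewrite take_takel //; lia.
  by rewrite E -cats1 takel_cat ?Hst // take_takel.
have : nth x0 V j.+1 = c.
  by rewrite -(prefix_nth x0 V3) ?size_rcons ?Hst // nth_rcons Hst ltnn eqxx.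
by rewrite EV => E; move: Hne; rewrite E eqxx.
Qed.

Lemma forced_uniq (A : finType) (T : A -> A -> bool) (irr : irreducible01 T) x0
 (w : seq A) lo
 (forced : forall j c, (lo <= j)%N -> (j.+1 < size w)%N -> T c (nth x0 w j) ->
     c = nth x0 w j.+1)
 (z z' c : A) (Hz : T z' z) (Hc : T c z) (Hne : c != z') : uniq (drop lo w).
Proof.
apply/negPn/negP => /(uniqPn x0) [i [j [Hij Hj Eij]]].
rewrite size_drop in Hj; rewrite !nth_drop in Eij.
have {}Hj : (j < size w - lo)%N by exact: Hj.
pose C := [seq nth x0 w (lo + l) | l <- iota i (j - i)].
have closed : forall x d, x \in C -> T d x -> d \in C.
  move=> x d /mapP [l]; rewrite mem_iota => /andP [Hl1 Hl2] -> Hd.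
  have Hlt : ((lo + l).+1 < size w)%N by lia.
  rewrite (forced (lo + l) d (leq_addr _ _) Hlt Hd) -addnS.
  case: (ltnP l.+1 j) => H.
    by apply/mapP; exists l.+1 => //; rewrite mem_iota; lia.
  have -> : l.+1 = j by lia.
  by rewrite -Eij; apply/mapP; exists i => //; rewrite mem_iota; lia.
have reach : forall p x, path (fun x y => T y x) x p -> x \in C -> last x p \in C.
  elim => [|a p IH] x //= /andP [Hxa Hp] Hx.
  exact: IH Hp (closed _ _ Hx Hxa).
have zC : z \in C.
  have := irr (nth x0 w (lo + i)) z; case/connectP => p Hp ->.
  by apply: reach Hp _; apply/mapP; exists i => //; rewrite mem_iota; lia.
case/mapP: zC => l; rewrite mem_iota => /andP [Hl1 Hl2] Ez.
have Hlt : ((lo + l).+1 < size w)%N by lia.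
have F1 := forced (lo + l) c (leq_addr _ _) Hlt ltac:(by rewrite -Ez).
have F2 := forced (lo + l) z' (leq_addr _ _) Hlt ltac:(by rewrite -Ez).
by move: Hne; rewrite F1 F2 eqxx.
Qed.

Lemma uniq_size_card (A : finType) (s : seq A) : uniq s -> (size s <= #|A|)%N.
Proof. by move=> /card_uniqP <-; exact: max_card. Qed.

Ltac keep_arith P :=
  lazymatch P with
  | is_true (leq _ _) => idtac
  | is_true (andb (leq _ _) (leq _ _)) => idtac
  | @eq ?T _ _ => unify T nat
  | ~ is_true (leq _ _) => idtac
  | ~ (@eq ?T _ _) => unify T nat
  end.

Ltac nlia :=
  repeat match goal with
  | H : ?P |- _ => tryif keep_arith P then fail else clear H
  end; lia.

Import GRing.Theory Num.Theory.
Local Open Scope ring_scope.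

Theorem corollary3p3 (A : finType) (T : A -> A -> bool) (k : nat) (x0 : A)
  (w1 w2 : seq A) (d2 : nat) (al : nat -> algC) (v : {ffun A -> algC}) :
  irreducible01 T ->
  size w1 = k.+1 -> size w2 = k.+1 -> admissible T w1 -> admissible T w2 ->
  let a' := behead w1 in
  let b' := behead w2 in
  let h1 := hword T a' in
  let h2 := hword T b' in
  let d1 := h1 in
  (* d2 is the least j with T_k^j [b_1...b_k] in W *)
  (forall j, (j < d2)%N -> ~ in_W T a' d1 (iter j (@Tk A T k) (bvec k b'))) ->
  (* the expansion of T_k^{d2} [b_1 ... b_k] *)
  iter d2 (@Tk A T k) (bvec k b') =
    \sum_(i < d1) sc (al i) (iter i (@Tk A T k) (bvec k a')) + psi T k v ->
  let delta := (h2 - d2)%N in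
  let b := nth x0 w2 d2.+1 in
  let I := [seq i <- iota 0 d1 | al i != 0] in
  let n := size I in
  let im (m : nat) := nth 0%N I m.-1 in
  let s (m : nat) := if m == 0%N then subw w2 d2.+1 h2.+1
                     else subw w1 (im m).+1 h1.+1 in
  let Bm (m : nat) := if (m < n)%N then subw w1 (im m).+1 (im m.+1)
                      else subw w1 (im n).+1 h1.+1 in
  (d2 < h2)%N ->
  (* (A)(i) *)
  (forall m m', (m <= n)%N -> (m' <= n)%N -> m != m' ->
     [disjoint Sset T k (s m) & Sset T k (s m')]) ->
  \bigcup_(m < n.+1) Sset T k (s m) = Sset T k [:: b] ->
  (* (A)(ii) *)
  v b = 1 ->
  (forall m, (0 < m <= n)%N -> al (im m) = -1) ->
  (* (A)(iii) *)
  (exists B : seq A, simple_word B /\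
     (forall m, (0 < m < n)%N -> Bm m = B) /\
     ((0 < n)%N -> differs_last (Bm n) B)) ->
  (* c^{11}_{d1-i} = 0 for 0 < i < delta *)
  (forall i, (0 < i < delta)%N -> (i <= d1)%N ->
     take (k.+1 - i) w1 <> drop i w1) /\
  (* if h1 <= h2, c^{21}_{d1-i} = 0 for 0 <= i < delta - r + 1 *)
  ((h1 <= h2)%N -> forall i, (i + #|A| <= delta)%N -> (i <= d1)%N ->
     take (k.+1 - i) w2 <> drop i w1).
Proof.
move=> irr sz1 sz2 adm1 adm2 a' b' h1 h2 d1 notW Hexp delta b I n im s Bm Hd2
  Hdisj Hunion Hvb Hal HB.
Local Open Scope nat_scope.
clear notW Hexp Hvb Hal.
have Hszb : size b' = k by rewrite /b' size_behead sz2.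
have Hsza : size a' = k by rewrite /a' size_behead sz1.
have kpos : 0 < k.
  rewrite lt0n; apply/negP => /eqP k0.
  by move: Hd2; rewrite /h2 /hword Hszb k0.
have Hh2 : h2 < k by rewrite -Hszb; apply: hword_lt; rewrite Hszb.
have Hh1 : h1 < k by rewrite -Hsza; apply: hword_lt; rewrite Hsza.
have succ : forall z, exists c, T c z.
  apply: (@succ_of _ _ irr (nth x0 w2 0) (nth x0 w2 1)).
  by apply: (@adm_nth _ _ x0 w2 0 adm2); rewrite sz2.
have nthb : forall j, nth x0 b' j = nth x0 w2 j.+1 by move=> j; rewrite /b' nth_behead.
have ntha : forall j, nth x0 a' j = nth x0 w1 j.+1 by move=> j; rewrite /a' nth_behead.
have h2pos : 0 < h2 by nlia.
have brb : branch T (nth x0 w2 h2) (nth x0 w2 h2.+1).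
  have := @hword_branch _ T x0 b' h2pos ltac:(by rewrite Hszb).
  by rewrite -/h2 !nthb prednK.
have Imem : forall m, m < n -> nth 0 I m < h1.
  move=> m Hm; have : nth 0 I m \in I := mem_nth 0 Hm.
  by rewrite mem_filter mem_iota => /andP [_ /andP [_ H]].
have Isort : sorted ltn I := sorted_filter ltn_trans _ (iota_ltn_sorted 0 d1).
have Iinc : forall m m', m < m' -> m' < n -> nth 0 I m < nth 0 I m'.
  move=> m m' H1 H2.
  have := @sorted_ltn_nth _ ltn ltn_trans 0 I Isort m m'.
  by apply; rewrite ?inE /= -/n //; nlia.
set p0 := subw w2 d2.+1 h2.
set z0 := nth x0 w2 h2.+1.
have Es0 : s 0 = rcons p0 z0.
  by rewrite /s /= /p0 /z0 (@subw_rcons _ x0) //; rewrite ?sz2; nlia.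
have Hszp0 : size p0 = h2 - d2 by rewrite /p0 subw_size //; rewrite ?sz2; nlia.
have admp0 : admissible T (rcons p0 z0) by rewrite -Es0 /s /=; exact: subw_adm.
have hdp0 : head x0 p0 = b.
  by rewrite -nth0 /p0 subw_nth ?addn0 //; rewrite ?sz2; nlia.
have lastp0 : last x0 p0 = nth x0 w2 h2.
  rewrite -nth_last Hszp0 /p0 subw_nth; [congr nth; nlia | nlia | rewrite ?sz2; nlia].
have br0 : branch T (last x0 p0) z0 by rewrite lastp0.
have inS : forall (tU : k.-tuple A) u,
    (tU \in Sset T k u) = admissible T tU && prefix u tU.
  by move=> tU u; rewrite /Sset inE.
have cover : forall U, size U = k -> admissible T U -> prefix [:: b] U ->
    exists2 m, m <= n & prefix (s m) U.
  move=> U HU AU PU.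
  pose tU := @Tuple k A U (introT eqP HU).
  have : tU \in Sset T k [:: b] by rewrite inS AU PU.
  rewrite -Hunion => /bigcupP [m _]; rewrite inS => /andP [_ Hm].
  by exists m => //; rewrite -ltnS.
have disj : forall U m m', size U = k -> admissible T U -> m <= n -> m' <= n ->
    m != m' -> prefix (s m) U -> prefix (s m') U -> False.
  move=> U m m' HU AU Hm Hm' Hmm' P1 P2.
  pose tU := @Tuple k A U (introT eqP HU).
  have := disjointFr (Hdisj m m' Hm Hm' Hmm') (_ : tU \in Sset T k (s m)).
  by rewrite !inS AU P1 P2 => /(_ isT).
have npos : 0 < n.
  rewrite lt0n; apply/negP => /eqP n0.
  have [c [Hc1 Hc2]] := br0.
  have [U [U1 U2 U3]] := @ext_word _ _ x0 succ k (rcons p0 c)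
    (@adm_rcons _ _ x0 _ _ (adm_prefix (prefix_rcons _ _) admp0)
       ltac:(by rewrite Hszp0; nlia) Hc2)
    ltac:(by rewrite size_rcons) ltac:(by rewrite size_rcons Hszp0; nlia).
  have PU : prefix [:: b] U.
    rewrite -hdp0; apply: prefix_head (prefix_trans (prefix_rcons p0 c) U3) _.
    by rewrite Hszp0; nlia.
  have [m Hm Pm] := cover U U1 U2 PU.
  have m0 : m = 0 by nlia.
  move: Pm; rewrite m0 Es0 => Pm.
  by move: Hc1; rewrite (prefix_rcons2 U3 Pm) eqxx.
case: HB => B [_ [HBm HBn]].
have [p [x [y' [Hpx [EBn Hxy]]]]] := HBn npos.
set y := nth x0 w1 h1.+1.
have imlt : forall m, 0 < m <= n -> im m < h1.
  by move=> m Hm; rewrite /im; apply: Imem; nlia.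
have Esm : forall m, 0 < m -> s m = subw w1 (im m).+1 h1.+1.
  by move=> m Hm; rewrite /s; case: m Hm.
have Esn : Bm n = s n by rewrite /Bm ltnn Esm.
have Esrc : forall m, 0 < m <= n -> s m = rcons (subw w1 (im m).+1 h1) y.
  move=> m Hm; rewrite Esm; last by nlia.
  have := imlt m Hm => Hi.
  by rewrite (@subw_rcons _ x0) //; rewrite ?sz1; nlia.
have Ey : y' = y.
  have := Esrc n ltac:(nlia); rewrite -Esn EBn => /rcons_inj [].
  by [].
subst y'.
have Sdec : forall j, j < n -> s (n - j) = flatten (nseq j B) ++ Bm n.
  elim => [|j IH] Hj; first by rewrite subn0 Esn.
  have Hm : 0 < n - j.+1 by nlia.
  have Hi1 := imlt (n - j.+1) ltac:(nlia).
  have Hi2 := imlt (n - j.+1).+1 ltac:(nlia).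
  have Hinc : im (n - j.+1) < im (n - j.+1).+1.
    rewrite /im /=; apply: Iinc; nlia.
  rewrite (Esm _ Hm) (@subw_cat _ _ _ (im (n - j.+1).+1)); last first.
  - by rewrite sz1; nlia.
  - by nlia.
  - by nlia.
  have E1 : subw w1 (im (n - j.+1)).+1 (im (n - j.+1).+1) = B.
    rewrite -(HBm (n - j.+1)); last by nlia.
    by rewrite /Bm ifT //; nlia.
  have E2 : subw w1 (im (n - j.+1).+1).+1 h1.+1 = s (n - j).
    by rewrite Esm; [congr (subw w1 (im _).+1 h1.+1); nlia | nlia].
  rewrite E1 E2 IH /=; [by rewrite catA | nlia].
set Z := subw w1 (im 1).+1 h1.
have EZ : Z = flatten (nseq (n - 1) B) ++ p.
  have := Sdec (n - 1) ltac:(nlia).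
  rewrite (_ : n - (n - 1) = 1); last by nlia.
  rewrite Esrc; last by nlia.
  by rewrite EBn -rcons_cat => /rcons_inj [].
pose F u := exists2 m, 0 < m <= n & u = s m.
have Fform : forall u, F u ->
    exists u', [/\ u = rcons u' y, prefix u' Z & ~~ prefix u Z].
  move=> u [m Hm ->]; exists (flatten (nseq (n - m) B) ++ p).
  have Esm' : s m = flatten (nseq (n - m) B) ++ rcons p y.
    have := Sdec (n - m) ltac:(nlia).
    by rewrite (_ : n - (n - m) = m) ?EBn //; nlia.
  split; first by rewrite Esm' rcons_cat.
  - rewrite EZ; case: (m =P 1) => [-> | Hm1]; first exact: prefix_refl.
    rewrite (_ : n - 1 = (n - m) + (m - 2).+1); last by nlia.
    rewrite nseqD flatten_cat -catA prefix_catr // eqxx /=.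
    rewrite -catA; apply: prefix_catl.
    exact: prefix_trans (prefix_rcons p x) Hpx.
  - case: (m =P 1) => [Em | Hm1].
      rewrite Em Esrc; last by nlia.
      by apply/negP => /size_prefix; rewrite size_rcons ltnn.
    rewrite Esm' EZ.
    rewrite (_ : n - 1 = (n - m) + (m - 2).+1); last by nlia.
    rewrite nseqD flatten_cat -catA prefix_catr // eqxx /=.
    apply/negP => H.
    have H2 : prefix (rcons p y) (rcons p x).
      apply: prefix_shorter H _ _; last by rewrite !size_rcons.
      by rewrite -catA; apply: prefix_catl.
    by move: Hxy; rewrite (prefix_rcons2 (prefix_refl _) H2) eqxx.
have FZ : F (rcons Z y) by exists 1; [nlia | rewrite Esrc //; nlia].
have cover' : forall U, size U = k -> admissible T U -> prefix [:: b] U ->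
    prefix (rcons p0 z0) U \/ exists2 u, F u & prefix u U.
  move=> U HU AU PU; have [m Hm Pm] := cover U HU AU PU.
  case: (posnP m) => [m0|mpos]; first by left; rewrite -Es0 -m0.
  by right; exists (s m) => //; exists m => //; nlia.
have disj' : forall U u, size U = k -> admissible T U -> F u ->
    prefix (rcons p0 z0) U -> prefix u U -> False.
  move=> U u HU AU [m Hm ->] P0 Pm.
  apply: (disj U 0 m HU AU (leq0n n) ltac:(nlia) ltac:(rewrite eq_sym -lt0n; nlia)
     ltac:(by rewrite Es0) Pm).
have im1 := imlt 1 ltac:(nlia).
have szZ : size Z = h1 - im 1.
  by rewrite /Z subw_size; [nlia | rewrite ?sz1; nlia].
have E1 := Esrc 1 ltac:(nlia).
have admZ : admissible T (rcons Z y).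
  by rewrite -E1 Esm //; exact: subw_adm.
have hdZ : head x0 Z = b.
  have [U [U1 U2 U3]] := @ext_word _ _ x0 succ k (rcons Z y) admZ
     ltac:(by rewrite size_rcons) ltac:(rewrite size_rcons szZ; nlia).
  pose tU := @Tuple k A U (introT eqP U1).
  have : tU \in \bigcup_(m < n.+1) Sset T k (s m).
    apply/bigcupP; exists (Ordinal (npos : 1 < n.+1)) => //.
    rewrite inS; apply/andP; split => //=.
    by rewrite E1.
  rewrite Hunion inS => /andP [_ Pb].
  have E2 := prefix_nth x0 Pb (i:=0) isT.
  have E3 := prefix_nth x0 U3 (i:=0) ltac:(by rewrite size_rcons).
  rewrite -nth0 (_ : nth x0 Z 0 = nth x0 (rcons Z y) 0); last first.
    by rewrite nth_rcons szZ ifT //; nlia.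
  by rewrite E3 -E2.
have lastZ : last x0 Z = nth x0 w1 h1.
  rewrite -nth_last szZ /Z subw_nth; [congr nth; nlia | nlia | rewrite ?sz1; nlia].
have brZ : branch T (last x0 Z) y.
  have h1pos : 0 < h1 by nlia.
  have := @hword_branch _ T x0 a' h1pos ltac:(by rewrite Hsza).
  by rewrite -/h1 !ntha prednK // lastZ.
have [Ep0 Hz0 Cstar] := @cut_lemma A T x0 b y z0 k p0 Z F succ cover' disj' Fform FZ
  admp0 ltac:(rewrite Hszp0; nlia) ltac:(rewrite Hszp0; nlia) hdp0 br0 admZ
  ltac:(rewrite szZ; nlia) ltac:(rewrite szZ; nlia) hdZ brZ.
have Hdelta : delta = h1 - im 1 by rewrite /delta -Hszp0 Ep0 szZ.
split.
  move=> i /andP [Hi0 Hid] Hi1 Heq.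
  rewrite Hdelta in Hid.
  have Per : forall j, j < k.+1 - i -> nth x0 w1 j = nth x0 w1 (i + j).
    move=> j Hj; have := congr1 (fun l => nth x0 l j) Heq => /=.
    by rewrite nth_take // nth_drop.
  set q := h1 - i - (im 1).+1.
  have Hq : q.+1 < size Z by rewrite szZ; nlia.
  have E4 : nth x0 Z q = nth x0 w1 h1.
    rewrite /Z subw_nth; [| nlia | rewrite ?sz1; nlia].
    rewrite (_ : (im 1).+1 + q = h1 - i); last by nlia.
    rewrite Per; [congr nth; nlia | nlia].
  have E5 : nth x0 Z q.+1 = y.
    rewrite /Z subw_nth; [| nlia | rewrite ?sz1; nlia].
    rewrite (_ : (im 1).+1 + q.+1 = (h1 - i).+1); last by nlia.
    rewrite Per; [rewrite /y; congr nth; nlia | nlia].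
  have := Cstar q Hq ltac:(by rewrite E4 -lastZ).
  by rewrite E5 eqxx.
move=> H12 i Hir Hid Heq.
have Per2 : forall j, j < k.+1 - i -> nth x0 w2 j = nth x0 w1 (i + j).
  move=> j Hj; have := congr1 (fun l => nth x0 l j) Heq => /=.
  by rewrite nth_take // nth_drop.
have adma : admissible T a' by rewrite /a' -drop1; exact: drop_sorted.
have forcedA : forall j c, h1.+1 <= j -> j.+1 < size w1 -> T c (nth x0 w1 j) ->
    c = nth x0 w1 j.+1.
  move=> j c Hj Hs Hc.
  have := @hword_forced _ T x0 succ a' j.-1 c adma ltac:(rewrite -/h1; nlia)
    ltac:(rewrite Hsza; rewrite sz1 in Hs; nlia) ltac:(by rewrite ntha prednK //; nlia).
  by rewrite ntha prednK //; nlia.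
have [c [Hc1 Hc2]] := brb.
have Hz : T (nth x0 w2 h2.+1) (nth x0 w2 h2).
  by apply: adm_nth adm2 _; rewrite sz2; nlia.
have Hu := @forced_uniq _ T irr x0 w1 h1.+1 forcedA _ _ _ Hz Hc2 Hc1.
have Hcard := uniq_size_card Hu.
rewrite size_drop sz1 in Hcard.
set j0 := h1 - i.
have Hj0 : d2 < j0 by rewrite /delta in Hir; nlia.
have Ej0 : nth x0 w2 j0 = nth x0 w1 h1 by rewrite Per2; [congr nth; nlia | nlia].
have Ej1 : nth x0 w2 j0.+1 = y by rewrite Per2; [rewrite /y; congr nth; nlia | nlia].
case: (ltnP j0 h2) => Hj0h.
  set q := j0 - d2.+1.
  have Hq : q.+1 < size Z by rewrite -Ep0 Hszp0; nlia.
  have E4 : nth x0 Z q = nth x0 w2 j0.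
    rewrite -Ep0 /p0 subw_nth; [congr nth; nlia | nlia | rewrite ?sz2; nlia].
  have E5 : nth x0 Z q.+1 = nth x0 w2 j0.+1.
    rewrite -Ep0 /p0 subw_nth; [congr nth; nlia | nlia | rewrite ?sz2; nlia].
  have := Cstar q Hq ltac:(by rewrite E4 Ej0 -lastZ).
  by rewrite E5 Ej1 eqxx.
have Ej : j0 = h2 by nlia.
by move: Hz0; rewrite /z0 -Ej Ej1 eqxx.
Qed.
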